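(* Let $M_1$ and $M_2$ be uniformly dense matroids on the same finite ground set $E$. Then their intersection $M_1\wedge M_2$ is a uniformly dense matroid on $E$.
   Context: For a matroid $M=(E,\mathcal{B})$, the dual is $M^\star=(E,\{E\setminus B: B\in\mathcal{B}\})$. The union of matroids $M_1=(E,\mathcal{B}_1)$, $M_2=(E,\mathcal{B}_2)$ is the matroid on $E$ whose bases are the inclusion-maximal sets among $\{B_1\cup B_2: B_1\in\mathcal{B}_1,B_2\in\mathcal{B}_2\}$. The intersection is $M_1\wedge M_2=(M_1^\star\vee M_2^\star)^\star$. With $\operatorname{rank}(A)=\max_B|A\cap B|$ and $\rho(A)=|A|/\operatorname{rank}(A)$, a matroid is uniformly dense if $\rho(A)\le\rho(E)$ for all nonempty $A\subseteq E$ (matroids assumed loopless). *)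

(* Defs.v *)
From mathcomp Require Import all_boot.
Set Implicit Arguments. Unset Strict Implicit. Unset Printing Implicit Defensive.

(* A matroid on a finite ground set E (a finType) is given by its family of
   bases, a {set {set E}}. *)
Section Matroids.
Variable E : finType.

Definition is_matroid (B : {set {set E}}) : Prop :=
  B != set0 /\
  forall B1 B2, B1 \in B -> B2 \in B ->
    forall x, x \in B1 :\: B2 ->
      exists2 y, y \in B2 :\: B1 & (y |: (B1 :\ x)) \in B.

Definition mdual (B : {set {set E}}) : {set {set E}} :=
  [set ~: X | X in B].

Definition munion (B1 B2 : {set {set E}}) : {set {set E}} :=
  let U := [set X :|: Y | X in B1, Y in B2] in
  [set X in U | [forall Y in U, (X \subset Y) ==> (Y == X)]].

Definition mmeet (B1 B2 : {set {set E}}) : {set {set E}} :=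
  mdual (munion (mdual B1) (mdual B2)).

Definition mrank (B : {set {set E}}) (A : {set E}) : nat :=
  \max_(X in B) #|A :&: X|.

Definition loopless (B : {set {set E}}) : Prop :=
  forall e : E, exists2 X, X \in B & e \in X.

(* rho(A) <= rho(E) for all nonempty A, i.e. |A|/rank(A) <= |E|/rank(E),
   stated cross-multiplied. *)
Definition uniformly_dense (B : {set {set E}}) : Prop :=
  forall A : {set E}, A != set0 ->
    #|A| * mrank B [set: E] <= #|E| * mrank B A.

End Matroids.

(* Main.v *)
Require Import Defs.
From mathcomp Require Import all_boot.
From mathcomp Require Import zify.
Set Implicit Arguments. Unset Strict Implicit. Unset Printing Implicit Defensive.

Section M.
Variable E : finType.
Implicit Types (B : {set {set E}}) (A X Y I J K : {set E}).

Definition ind B I := [exists X in B, I \subset X].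

Lemma indP B I : reflect (exists2 X, X \in B & I \subset X) (ind B I).
Proof.
apply: (iffP existsP) => [[X /andP[XB IX]]|[X XB IX]]; first by exists X.
by exists X; rewrite XB IX.
Qed.

Lemma ind_sub B I J : J \subset I -> ind B I -> ind B J.
Proof.
move=> JI /indP[X XB IX]; apply/indP; exists X => //; exact: subset_trans IX.
Qed.

Lemma equicard B : is_matroid B -> forall X Y, X \in B -> Y \in B -> #|X| = #|Y|.
Proof.
move=> [_ ex].
suff H: forall n X Y, X \in B -> Y \in B -> #|X :\: Y| = n -> #|X| = #|Y|.
  by move=> X Y XB YB; exact: H _ _ _ XB YB erefl.
elim=> [|n IH] X Y XB YB.
  move/eqP; rewrite cards_eq0 setD_eq0 => XY.
  have YX : Y \subset X.
    apply/subsetP=> y yY; apply/negPn/negP => ynX.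
    have yYX : y \in Y :\: X by rewrite inE ynX yY.
    have [z] := ex Y X YB XB y yYX.
    rewrite inE => /andP[zY zX] _.
    by move/subsetP: XY => /(_ z zX); rewrite (negbTE zY).
  by apply/eqP; rewrite eqn_leq !subset_leq_card.
move=> hc; have: 0 < #|X :\: Y| by rewrite hc.
rewrite card_gt0 => /set0Pn [x xXY].
have [y yYX yB] := ex X Y XB YB x xXY.
have [xY xX] : x \notin Y /\ x \in X by move: xXY; rewrite inE => /andP.
have [yX yY] : y \notin X /\ y \in Y by move: yYX; rewrite inE => /andP.
have e1 : #|y |: (X :\ x)| = #|X|.
  rewrite cardsU1 (cardsD1 x X) xX !inE negb_and yX orbT /=; lia.
have e2 : #|(y |: (X :\ x)) :\: Y| = n.
  have -> : (y |: (X :\ x)) :\: Y = (X :\: Y) :\ x.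
    apply/setP=> w; rewrite !inE.
    case: (eqVneq w y) => [->|_ /=]; first by rewrite yY /=; case: (y != x) (y \in X).
    by case: (w != x); case: (w \in Y); case: (w \in X).
  move: hc; rewrite (cardsD1 x (X :\: Y)) xXY; lia.
by rewrite -e1; exact: IH.
Qed.


Lemma card_lt_wit A1 A2 (x : E) :
  A1 \subset A2 -> x \in A2 -> x \notin A1 -> #|A1| < #|A2|.
Proof. by move=> s xA2 xA1; apply: proper_card; apply/properP; split=> //; exists x. Qed.

Lemma augment B : is_matroid B -> forall I J, ind B I -> ind B J ->
  #|I| < #|J| -> exists2 x, x \in J :\: I & ind B (x |: I).
Proof.
move=> mB I J /indP[BI0 BI0B IBI0] /indP[BJ0 BJ0B JBJ0] ltIJ.
case: (boolP [exists x in J :\: I, ind B (x |: I)]) => [/existsP[x /andP[]]|nox].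
  by exists x.
exfalso.
have nox' : forall x, x \in J -> x \notin I -> ~~ ind B (x |: I).
  move=> x xJ xI; apply: contra nox => h; apply/existsP; exists x.
  by rewrite inE xJ xI h.
pose P (p : {set E} * {set E}) := [&& p.1 \in B, p.2 \in B, I \subset p.1 & J \subset p.2].
have P0 : P (BI0, BJ0) by rewrite /P /= BI0B BJ0B IBI0 JBJ0.
case: (arg_maxnP (fun p => #|p.1 :&: p.2|) P0) => [[BI BJ]].
rewrite /P /= => /and4P[BIB BJB IBI JBJ] maxp.
have [_ ex] := mB.
have ha : forall x, x \in BI -> x \in J -> x \in I.
  move=> x xBI xJ; apply/negPn/negP => xI; move: (nox' x xJ xI); apply/negP/negPn.
  apply/indP; exists BI => //; apply/subsetP=> w; rewrite !inE => /orP[/eqP->//|].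
  by move/subsetP: IBI; apply.
have hb : forall y, y \in BJ -> y \notin BI -> y \in J.
  move=> y yBJ yBI; apply/negPn/negP => yJ.
  have yy : y \in BJ :\: BI by rewrite inE yBI yBJ.
  have [z] := ex BJ BI BJB BIB y yy.
  rewrite inE => /andP[zBJ zBI] hB.
  have : P (BI, z |: (BJ :\ y)).
    rewrite /P /= BIB hB IBI /=; apply/subsetP=> w wJ; rewrite !inE.
    have wBJ : w \in BJ by move/subsetP: JBJ; apply.
    have wy : w != y by apply/eqP=> wy; move: yJ; rewrite -wy wJ.
    by rewrite wBJ wy orbT.
  move/maxp => /=; apply/negP; rewrite -ltnNge.
  apply: (card_lt_wit (x := z)); last by rewrite inE (negbTE zBJ) andbF.
    apply/subsetP=> w; rewrite !inE => /andP[wBI wBJ].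
    have wy : w != y by apply/eqP=> wy; move: yBI; rewrite -wy wBI.
    by rewrite wBI wBJ wy !orbT.
  by rewrite !inE zBI eqxx.
have hc : forall y, y \in BI -> y \notin BJ -> y \in I.
  move=> y yBI yBJ; apply/negPn/negP => yI.
  have yy : y \in BI :\: BJ by rewrite inE yBI yBJ.
  have [z] := ex BI BJ BIB BJB y yy.
  rewrite inE => /andP[zBI zBJ] hB.
  have : P (z |: (BI :\ y), BJ).
    rewrite /P /= BJB hB JBJ /= andbT; apply/subsetP=> w wI; rewrite !inE.
    have wBI : w \in BI by move/subsetP: IBI; apply.
    have wy : w != y by apply/eqP=> wy; move: yI; rewrite -wy wI.
    by rewrite wBI wy orbT.
  move/maxp => /=; apply/negP; rewrite -ltnNge.
  apply: (card_lt_wit (x := z)); last by rewrite inE (negbTE zBI).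
    apply/subsetP=> w; rewrite !inE => /andP[wBI wBJ].
    have wy : w != y by apply/eqP=> wy; move: yBJ; rewrite -wy wBJ.
    by rewrite wBI wBJ wy !orbT.
  by rewrite !inE zBJ eqxx.
have e := equicard mB BIB BJB.
have l1 : #|BI :\: BJ| <= #|I :\: J|.
  apply: subset_leq_card; apply/subsetP=> y; rewrite !inE => /andP[yBJ yBI].
  rewrite (hc y yBI yBJ) andbT; apply: contra yBJ; by move/subsetP: JBJ; apply.
have l2 : #|J :\: I| <= #|BJ :\: BI|.
  apply: subset_leq_card; apply/subsetP=> x; rewrite !inE => /andP[xI xJ].
  have xBJ : x \in BJ by move/subsetP: JBJ; apply.
  rewrite xBJ andbT; apply: contra xI; by move/ha; apply.
have c1 := cardsID BJ BI. have c2 := cardsID BI BJ.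
have c3 := cardsID J I. have c4 := cardsID I J.
rewrite setIC in c1. rewrite setIC in c3. lia.
Qed.


Lemma extend B : is_matroid B -> forall I J, ind B I -> ind B J -> #|I| <= #|J| ->
  exists K, [/\ ind B K, I \subset K, K \subset I :|: J & #|K| = #|J|].
Proof.
move=> mB I J iI iJ le.
move: {2}(#|J| - #|I|) (erefl (#|J| - #|I|)) => k.
elim: k I iI le => [|k IH] I iI le hk.
  exists I; split=> //; [exact: subsetUl| lia].
have lt : #|I| < #|J| by lia.
have [x xJI ix] := augment mB iI iJ lt.
move: xJI; rewrite inE => /andP[xI xJ].
have cx : #|x |: I| = #|I|.+1 by rewrite cardsU1 xI.
have h1 : #|x |: I| <= #|J| by lia.
have h2 : #|J| - #|x |: I| = k by lia.
have [K [iK sK sK2 cK]] := IH (x |: I) ix h1 h2.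
exists K; split=> //.
  by apply: subset_trans sK; exact: subsetUr.
apply: (subset_trans sK2); apply/subsetP=> w; rewrite !inE.
by case/orP=> [/orP[/eqP->|->]|->]; rewrite ?xJ ?orbT.
Qed.

Lemma mrank_ge B A X : X \in B -> #|A :&: X| <= mrank B A.
Proof. by move=> XB; rewrite /mrank; apply: (leq_bigmax_cond X). Qed.

Lemma mrank_le B A m : (forall X, X \in B -> #|A :&: X| <= m) -> mrank B A <= m.
Proof. by move=> h; apply/bigmax_leqP. Qed.

Lemma mrank_att B A : B != set0 -> exists2 X, X \in B & mrank B A = #|A :&: X|.
Proof.
move=> hB; have : 0 < #|B| by rewrite card_gt0.
by case/(eq_bigmax_cond (fun X => #|A :&: X|)) => X XB e; exists X.
Qed.

Lemma mrank_sub B A : mrank B A <= #|A|.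
Proof. by apply: mrank_le => X _; apply: subset_leq_card; apply: subsetIl. Qed.

Lemma mrank_mono B X Y : X \subset Y -> mrank B X <= mrank B Y.
Proof.
move=> XY; apply: mrank_le => C CB; apply: leq_trans (mrank_ge _ CB).
by apply: subset_leq_card; apply: setSI.
Qed.

Lemma ind_mrank B I : ind B I -> mrank B I = #|I|.
Proof.
move=> /indP[X XB IX]; apply/eqP; rewrite eqn_leq mrank_sub /=.
by apply: leq_trans (mrank_ge _ XB); rewrite (setIidPl IX).
Qed.

Lemma mrank_ind B I : B != set0 -> mrank B I = #|I| -> ind B I.
Proof.
move=> hB e; have [X XB eX] := mrank_att I hB.
apply/indP; exists X => //.
have : I :&: X == I by rewrite eqEcard subsetIl -eX e leqnn.
by move/eqP/setIidPl.
Qed.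

Lemma dual_matroid B : is_matroid B -> is_matroid (mdual B).
Proof.
move=> mB; have [hB ex] := mB; split.
  have [X XB] := set0Pn _ hB; apply/set0Pn; exists (~: X); exact: imset_f.
move=> D1 D2 /imsetP[C1 C1B ->] /imsetP[C2 C2B ->] x.
rewrite !inE negbK => /andP[xC2 xC1].
have iI : ind B (x |: (C1 :&: C2)).
  apply/indP; exists C2 => //; apply/subsetP=> w; rewrite !inE.
  by case/orP=> [/eqP->//|/andP[]].
have eC := equicard mB C1B C2B.
have lt : #|C1 :&: C2| < #|C2|.
  by apply: (card_lt_wit (x := x)) => //; [exact: subsetIr|rewrite inE (negbTE xC1)].
have le : #|x |: (C1 :&: C2)| <= #|C1|.
  rewrite cardsU1; lia.
have iC1 : ind B C1 by apply/indP; exists C1.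
have [K [iK sK sK2 cK]] := extend mB iI iC1 le.
have KB : K \in B.
  have [D DB KD] := indP _ _ iK.
  have : K == D by rewrite eqEcard KD (equicard mB DB C1B) cK leqnn.
  by move/eqP->.
have xK : x \in K by move/subsetP: sK; apply; rewrite !inE eqxx.
have [y yC1 yK] : exists2 y, y \in C1 & y \notin K.
  apply/subsetPn/negP => C1K.
  have : #|x |: C1| <= #|K| by apply: subset_leq_card; rewrite subUset sub1set xK C1K.
  by rewrite cardsU1 xC1 cK add1n ltnn.
have yC2 : y \notin C2.
  apply: contra yK => yC2; move/subsetP: sK; apply; by rewrite !inE yC1 yC2 orbT.
have yx : y != x by apply: contraNneq xC1 => <-.
have Keq : K = x |: (C1 :\ y).
  apply/eqP; rewrite eqEcard; apply/andP; split.
    apply/subsetP=> w wK; move/subsetP: sK2 => /(_ w wK); rewrite !inE.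
    have wy : w != y by apply: contraNneq yK => <-.
    by rewrite wy /=; case/orP=> [/orP[->//|/andP[->]]|->]; rewrite ?orbT.
  rewrite cK; apply: leq_trans (leq_card_setU _ _) _.
  by rewrite cards1 (cardsD1 y C1) yC1.
exists y; first by rewrite !inE negbK yC1 yC2.
apply/imsetP; exists K => //; rewrite Keq; apply/setP=> w; rewrite !inE.
case: (eqVneq w y) => [->|wy]; first by rewrite (negbTE yx) yC1.
by case: (w == x); case: (w \in C1).
Qed.

Lemma mrank_submod B : is_matroid B -> forall X Y,
  mrank B (X :|: Y) + mrank B (X :&: Y) <= mrank B X + mrank B Y.
Proof.
move=> mB X Y; have [hB _] := mB.
have [B0 B0B e0] := mrank_att (X :&: Y) hB.
have [B1 B1B e1] := mrank_att (X :|: Y) hB.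
set I := (X :&: Y) :&: B0. set J := (X :|: Y) :&: B1.
have iI : ind B I by apply/indP; exists B0 => //; exact: subsetIr.
have iJ : ind B J by apply/indP; exists B1 => //; exact: subsetIr.
have le : #|I| <= #|J| by rewrite -e0 -e1; apply: mrank_mono; exact: (subset_trans (subsetIl _ _) (subsetUl _ _)).
have [K [iK sK sK2 cK]] := extend mB iI iJ le.
have [D DB KD] := indP _ _ iK.
have KXY : K \subset X :|: Y.
  apply: (subset_trans sK2); rewrite subUset; apply/andP; split.
    apply: subset_trans (subsetIl _ _) _; exact: (subset_trans (subsetIl _ _) (subsetUl _ _)).
  exact: subsetIl.
have hX : #|K :&: X| <= mrank B X.
  apply: leq_trans (mrank_ge _ DB); apply: subset_leq_card.
  by rewrite setIC; apply: setIS.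
have hY : #|K :&: Y| <= mrank B Y.
  apply: leq_trans (mrank_ge _ DB); apply: subset_leq_card.
  by rewrite setIC; apply: setIS.
have u : (K :&: X) :|: (K :&: Y) = K by rewrite -setIUr; apply/setIidPl.
have hI : #|I| <= #|(K :&: X) :&: (K :&: Y)|.
  apply: subset_leq_card; apply/subsetP=> w wI.
  have wK : w \in K by move/subsetP: sK; apply.
  by move: wI; rewrite /I !inE wK => /andP[/andP[-> ->] _].
have := cardsUI (K :&: X) (K :&: Y); rewrite u => hU.
rewrite e1 e0 -cK; apply: leq_trans _ (leq_add hX hY).
by rewrite -hU leq_add2l.
Qed.


Implicit Types (r : {set E} -> nat) (S : {set E}).

Definition rkf r := [/\ forall X, r X <= #|X|,
  forall X Y, X \subset Y -> r X <= r Y &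
  forall X Y, r (X :|: Y) + r (X :&: Y) <= r X + r Y].

Lemma rkf_subadd r X Y : rkf r -> r (X :|: Y) <= r X + r Y.
Proof. by case=> _ _ h; apply: leq_trans (h X Y); apply: leq_addr. Qed.

Definition contr r (e : E) X := r (e |: X) - 1.

Lemma rkf_contr r e : rkf r -> r [set e] = 1 -> rkf (contr r e).
Proof.
move=> hr re; have [hc hm hs] := hr.
have ge1 : forall X, 1 <= r (e |: X).
  by move=> X; rewrite -re; apply: hm; apply: subsetUl.
split; rewrite /contr.
- move=> X; have := hc (e |: X); rewrite cardsU1.
  have := ge1 X; case: (e \notin X) => /=; lia.
- by move=> X Y XY; apply: leq_sub2r; apply: hm; apply: setUS.
- move=> X Y; have := hs (e |: X) (e |: Y).
  rewrite -setUUr -setUIr.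
  have := ge1 X; have := ge1 Y; have := ge1 (X :|: Y); have := ge1 (X :&: Y).
  lia.
Qed.

Lemma base0 r1 r2 : rkf r1 -> rkf r2 ->
  exists I Y, [/\ I \subset set0, Y \subset set0, r1 I = #|I|, r2 I = #|I|
     & r1 Y + r2 (set0 :\: Y) <= #|I|].
Proof.
move=> [c1 _ _] [c2 _ _]; exists set0, set0.
have z1 : r1 set0 = 0 by apply/eqP; rewrite -leqn0; have := c1 set0; rewrite cards0.
have z2 : r2 set0 = 0 by apply/eqP; rewrite -leqn0; have := c2 set0; rewrite cards0.
by rewrite setD0 z1 z2 cards0.
Qed.

Theorem inter r1 r2 S : rkf r1 -> rkf r2 ->
  exists I Y, [/\ I \subset S, Y \subset S, r1 I = #|I|, r2 I = #|I|
     & r1 Y + r2 (S :\: Y) <= #|I|].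
Proof.
move=> h1 h2.
suff H : forall n S r1 r2, #|S| <= n -> rkf r1 -> rkf r2 ->
  exists I Y, [/\ I \subset S, Y \subset S, r1 I = #|I|, r2 I = #|I|
     & r1 Y + r2 (S :\: Y) <= #|I|] by exact: H _ _ _ _ (leqnn _) h1 h2.
clear r1 r2 h1 h2 S.
elim=> [|n IH] S r1 r2 hS h1 h2.
  move: hS; rewrite leqn0 cards_eq0 => /eqP ->; exact: base0.
case: (set_0Vmem S) => [->|[e eS]]; first exact: base0.
set S' := S :\ e.
have hS' : #|S'| <= n by move: hS; rewrite (cardsD1 e S) eS.
have [I' [Y' [sI' sY' i1 i2 v']]] := IH S' r1 r2 hS' h1 h2.
have [c1 m1 s1] := h1. have [c2 m2 s2] := h2.
have S'S : S' \subset S by apply: subsetDl.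
have eY' : e \notin Y'.
  by apply/negP => /(subsetP sY'); rewrite !inE eqxx.
have re1 : r1 [set e] <= 1 by have := c1 [set e]; rewrite cards1.
have re2 : r2 [set e] <= 1 by have := c2 [set e]; rewrite cards1.
have DY' : S :\: Y' \subset (S' :\: Y') :|: [set e].
  apply/subsetP=> w; rewrite !inE; case: (w == e); first by rewrite orbT.
  by rewrite /= orbF.
have bnd : r2 (S :\: Y') <= r2 (S' :\: Y') + r2 [set e].
  by apply: leq_trans (m2 _ _ DY') _; apply: rkf_subadd.
set m := #|I'|.
case: (boolP [exists Y : {set E}, (Y \subset S) && (r1 Y + r2 (S :\: Y) <= m)]).
  case/existsP=> Y /andP[YS vY]; exists I', Y; split=> //.
  exact: subset_trans sI' S'S.
move=> nY.
have Hs : forall Y, Y \subset S -> m < r1 Y + r2 (S :\: Y).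
  move=> Y YS; rewrite ltnNge; apply: contra nY => h; apply/existsP; exists Y.
  by rewrite YS h.
case: (posnP (r1 [set e])) => [r1e|r1e].
  exfalso; have YS : e |: Y' \subset S.
    by rewrite subUset sub1set eS (subset_trans sY' S'S).
  have := Hs _ YS.
  have -> : S :\: (e |: Y') = S' :\: Y'.
    apply/setP=> w; rewrite !inE; case: (w == e) => //=.
    by rewrite andbC.
  have := rkf_subadd [set e] Y' h1; rewrite r1e add0n.
  rewrite -/m in v'; lia.
case: (posnP (r2 [set e])) => [r2e|r2e].
  exfalso; have := Hs _ (subset_trans sY' S'S).
  rewrite -/m in v'; move: bnd; rewrite r2e; lia.
have e1 : r1 [set e] = 1 by lia.
have e2 : r2 [set e] = 1 by lia.
have [I'' [Y'' [sI'' sY'' j1 j2 v'']]] :=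
  IH S' (contr r1 e) (contr r2 e) hS' (rkf_contr h1 e1) (rkf_contr h2 e2).
have ge1 : forall r X, rkf r -> r [set e] = 1 -> 1 <= r (e |: X).
  by move=> r X [_ hm _] re; rewrite -re; apply: hm; apply: subsetUl.
have eI'' : e \notin I''.
  by apply/negP => /(subsetP sI''); rewrite !inE eqxx.
case: (leqP m #|I''|) => [lem|ltm].
  exists (e |: I''), Y'; split.
  - by rewrite subUset sub1set eS (subset_trans sI'' S'S).
  - exact: subset_trans sY' S'S.
  - move: j1; rewrite /contr cardsU1 eI''; have := ge1 r1 I'' h1 e1.
    move=> a b; clear -a b; lia.
  - move: j2; rewrite /contr cardsU1 eI''; have := ge1 r2 I'' h2 e2.
    move=> a b; clear -a b; lia.
  - rewrite cardsU1 eI''; rewrite -/m in v'.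
    move: bnd lem v' re2; rewrite /m; clear; lia.
exfalso.
set Z := e |: Y''.
have eqU : (S' :\: Y') :|: (e |: (S' :\: Y'')) = S :\: (Y' :&: Z).
  apply/setP=> w; rewrite !inE; case: (eqVneq w e) => [->|_] /=.
    by rewrite eS (negbTE eY') orbT.
  by case: (w \in S); case: (w \in Y'); case: (w \in Y'').
have eqI : (S' :\: Y') :&: (e |: (S' :\: Y'')) = S :\: (Y' :|: Z).
  apply/setP=> w; rewrite !inE; case: (eqVneq w e) => [->|_] /=.
    by rewrite orbT andbF.
  by case: (w \in S); case: (w \in Y'); case: (w \in Y'').
have ZS : Z \subset S by rewrite subUset sub1set eS (subset_trans sY'' S'S).
have Y'S : Y' \subset S := subset_trans sY' S'S.
have hU := Hs _ (subset_trans (subsetIl Y' Z) Y'S).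
have hI : m < r1 (Y' :|: Z) + r2 (S :\: (Y' :|: Z)).
  by apply: Hs; rewrite subUset Y'S ZS.
have sub1 := s1 Y' Z.
have sub2 := s2 (S' :\: Y') (e |: (S' :\: Y'')).
rewrite eqU eqI in sub2.
move: v''; rewrite /contr.
have := ge1 r1 Y'' h1 e1; have := ge1 r2 (S' :\: Y'') h2 e2.
rewrite -/Z; rewrite -/m in v'.
move=> g2 g1 vv; move: hU hI sub1 sub2 vv g1 g2 ltm v'; rewrite /m; clear; lia.
Qed.

Implicit Types (P Q Pa Pb Qa Qb W : {set E}) (Ba Bb : {set {set E}}).

Definition uind B1 B2 P := exists P1 P2, [/\ P = P1 :|: P2, ind B1 P1 & ind B2 P2].

Lemma step_case Ba Bb Pa Pb Qa (Qb : {set E}) : is_matroid Ba -> ind Ba Pa -> ind Bb Pb ->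
  [disjoint Pa & Pb] -> ind Ba Qa -> [disjoint Qa & Qb] -> #|Pa| < #|Qa| ->
  (forall Pa' Pb', Pa' :|: Pb' = Pa :|: Pb -> [disjoint Pa' & Pb'] ->
     ind Ba Pa' -> ind Bb Pb' ->
     #|Pa :\: Qa| + #|Pb :\: Qb| <= #|Pa' :\: Qa| + #|Pb' :\: Qb|) ->
  exists2 x, x \in Qa :\: (Pa :|: Pb) & ind Ba (x |: Pa).
Proof.
move=> mA iPa iPb dP iQa dQ lt hmin.
have [x] := augment mA iPa iQa lt; rewrite inE => /andP[xPa xQa] ix.
case: (boolP (x \in Pb)) => xPb; last first.
  by exists x => //; rewrite !inE negb_or xPa xPb xQa.
exfalso.
have xQb : x \notin Qb.
  by apply/negP => xQb; move: dQ; rewrite disjoint_sym => /disjointFr /(_ xQb); rewrite xQa.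
have := hmin (x |: Pa) (Pb :\ x).
have -> : (x |: Pa) :|: (Pb :\ x) = Pa :|: Pb.
  apply/setP=> w; rewrite !inE; case: (eqVneq w x) => [->|] /=; first by rewrite xPb orbT.
  by [].
have dP' : [disjoint x |: Pa & Pb :\ x].
  rewrite -setI_eq0; apply/eqP/setP=> w; rewrite !inE.
  case: (eqVneq w x) => [->|] //= _.
  case wPa: (w \in Pa) => //=; case wPb: (w \in Pb) => //.
  by move: wPb; rewrite (disjointFr dP wPa).
move=> /(_ erefl dP' ix (ind_sub (subsetDl _ _) iPb)).
have l1 : #|(x |: Pa) :\: Qa| <= #|Pa :\: Qa|.
  apply: subset_leq_card; apply/subsetP=> w; rewrite !inE.
  by case: (eqVneq w x) => [->|] /=; [rewrite xQa|].
have l2 : #|(Pb :\ x) :\: Qb| < #|Pb :\: Qb|.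
  apply: (card_lt_wit (x := x)); last by rewrite !inE eqxx andbF.
    by apply/subsetP=> w; rewrite !inE => /andP[-> /andP[_ ->]].
  by rewrite inE xQb xPb.
move: l1 l2; clear; lia.
Qed.

Lemma union_aug B1 B2 : is_matroid B1 -> is_matroid B2 -> forall P Q,
  uind B1 B2 P -> uind B1 B2 Q -> #|P| < #|Q| ->
  exists2 z, z \in Q :\: P & uind B1 B2 (z |: P).
Proof.
move=> m1 m2 P Q [P1 [P2 [eP iP1 iP2]]] [Q1 [Q2 [eQ iQ1 iQ2]]] lt.
set Q2' := Q2 :\: Q1.
have dQ : [disjoint Q1 & Q2'].
  by rewrite -setI_eq0; apply/eqP/setP=> w; rewrite !inE; case: (w \in Q1); rewrite ?andbF.
have eQ' : Q = Q1 :|: Q2'.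
  rewrite eQ; apply/setP=> w; rewrite !inE; by case: (w \in Q1).
have iQ2' : ind B2 Q2' by apply: ind_sub iQ2; apply: subsetDl.
pose good (p : {set E} * {set E}) :=
  [&& p.1 :|: p.2 == P, [disjoint p.1 & p.2], ind B1 p.1 & ind B2 p.2].
have g0 : good (P1, P2 :\: P1).
  apply/and4P; split => /=.
  - rewrite eP; apply/eqP/setP=> w; rewrite !inE; by case: (w \in P1).
  - by rewrite -setI_eq0; apply/eqP/setP=> w; rewrite !inE; case: (w \in P1); rewrite ?andbF.
  - done.
  - by apply: ind_sub iP2; apply: subsetDl.
case: (arg_minnP (fun p => #|p.1 :\: Q1| + #|p.2 :\: Q2'|) g0) => [[R1 R2]].
move=> /and4P[/= /eqP eR dR iR1 iR2] hmin.
have cP : #|P| = #|R1| + #|R2|.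
  by rewrite -eR cardsU; move: dR; rewrite -setI_eq0 => /eqP ->; rewrite cards0 subn0.
have cQ : #|Q| = #|Q1| + #|Q2'|.
  by rewrite eQ' cardsU; move: dQ; rewrite -setI_eq0 => /eqP ->; rewrite cards0 subn0.
case: (ltnP #|R1| #|Q1|) => [lt1|ge1].
  have hm : forall Pa' Pb', Pa' :|: Pb' = R1 :|: R2 -> [disjoint Pa' & Pb'] ->
     ind B1 Pa' -> ind B2 Pb' ->
     #|R1 :\: Q1| + #|R2 :\: Q2'| <= #|Pa' :\: Q1| + #|Pb' :\: Q2'|.
    move=> Pa' Pb' e d i1 i2; rewrite eR in e.
    by apply: (hmin (Pa', Pb')); apply/and4P; split => //=; rewrite e.
  have [x xQP ix] := step_case m1 iR1 iR2 dR iQ1 dQ lt1 hm.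
  rewrite eR in xQP; exists x.
    by move: xQP; rewrite eQ' !inE => /andP[-> ->].
  by exists (x |: R1), R2; split => //; rewrite -eR setUA.
have lt2 : #|R2| < #|Q2'|.
  by move: lt ge1; rewrite cP cQ; clear; lia.
have hm : forall Pa' Pb', Pa' :|: Pb' = R2 :|: R1 -> [disjoint Pa' & Pb'] ->
   ind B2 Pa' -> ind B1 Pb' ->
   #|R2 :\: Q2'| + #|R1 :\: Q1| <= #|Pa' :\: Q2'| + #|Pb' :\: Q1|.
  move=> Pa' Pb' e d i1 i2; rewrite [R2 :|: R1]setUC eR in e.
  rewrite addnC [X in _ <= X]addnC.
  apply: (hmin (Pb', Pa')); apply/and4P; split => //=.
  + by rewrite setUC e.
  + by rewrite disjoint_sym.
have dR' : [disjoint R2 & R1] by rewrite disjoint_sym.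
have dQ' : [disjoint Q2' & Q1] by rewrite disjoint_sym.
have [x xQP ix] := step_case m2 iR2 iR1 dR' iQ2' dQ' lt2 hm.
rewrite [R2 :|: R1]setUC eR in xQP; exists x.
  by move: xQP; rewrite eQ' !inE => /andP[-> ->]; rewrite orbT.
by exists R1, (x |: R2); split => //; rewrite -eR setUCA.
Qed.

Lemma munionP B1 B2 X : X \in munion B1 B2 ->
  [/\ exists C1, exists C2, [/\ C1 \in B1, C2 \in B2 & X = C1 :|: C2] &
      forall C1 C2, C1 \in B1 -> C2 \in B2 -> X \subset C1 :|: C2 -> C1 :|: C2 = X].
Proof.
rewrite /munion inE => /andP[/imset2P[C1 C2 C1B C2B ->] /forall_inP h].
split; first by exists C1, C2.
move=> D1 D2 D1B D2B sub; apply/eqP.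
have := h (D1 :|: D2); rewrite sub /=; apply.
by apply/imset2P; exists D1 D2.
Qed.

Lemma munion_exists B1 B2 C1 C2 : C1 \in B1 -> C2 \in B2 ->
  exists2 W, W \in munion B1 B2 & C1 :|: C2 \subset W.
Proof.
move=> C1B C2B.
set U := [set X :|: Y | X in B1, Y in B2].
have U0 : (C1 :|: C2 \in U) && (C1 :|: C2 \subset C1 :|: C2).
  by rewrite subxx andbT; apply/imset2P; exists C1 C2.
case: (@arg_maxnP _ (C1 :|: C2) (fun W => (W \in U) && (C1 :|: C2 \subset W)) (fun W => #|W|) U0) => W /andP[WU sW] hmax.
exists W => //; rewrite /munion inE WU /=; apply/forall_inP => Y YU; apply/implyP => WY.
have : #|Y| <= #|W| by apply: hmax; rewrite YU (subset_trans sW WY).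
by move=> le; rewrite eq_sym eqEcard WY le.
Qed.

Lemma uind_sub B1 B2 P : uind B1 B2 P ->
  exists C1, exists C2, [/\ C1 \in B1, C2 \in B2 & P \subset C1 :|: C2].
Proof.
move=> [P1 [P2 [-> /indP[C1 C1B s1] /indP[C2 C2B s2]]]].
by exists C1, C2; split => //; apply: setUSS.
Qed.

Lemma munion_uind B1 B2 X : X \in munion B1 B2 -> uind B1 B2 X.
Proof.
case/munionP => [[C1 [C2 [C1B C2B ->]]] _].
by exists C1, C2; split => //; apply/indP; [exists C1|exists C2].
Qed.

Lemma munion_card B1 B2 : is_matroid B1 -> is_matroid B2 -> forall X Y,
  X \in munion B1 B2 -> Y \in munion B1 B2 -> #|X| = #|Y|.
Proof.
move=> m1 m2.
have key : forall X Y, X \in munion B1 B2 -> Y \in munion B1 B2 -> #|X| <= #|Y|.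
  move=> X Y XN YN; rewrite leqNgt; apply/negP => lt.
  have [z] := union_aug m1 m2 (munion_uind YN) (munion_uind XN) lt.
  rewrite inE => /andP[zY _] /uind_sub [C1 [C2 [C1B C2B sub]]].
  have [_ hmax] := munionP YN.
  have := hmax C1 C2 C1B C2B (subset_trans (subsetUr _ _) sub).
  move=> e; move/subsetP: sub => /(_ z); rewrite e !inE eqxx /= => /(_ erefl).
  by rewrite (negbTE zY).
by move=> X Y XN YN; apply/eqP; rewrite eqn_leq !key.
Qed.

Lemma munion_matroid B1 B2 : is_matroid B1 -> is_matroid B2 ->
  is_matroid (munion B1 B2).
Proof.
move=> m1 m2; split.
  have [C1 C1B] := set0Pn _ m1.1; have [C2 C2B] := set0Pn _ m2.1.
  have [W WN _] := munion_exists C1B C2B; apply/set0Pn; by exists W.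
move=> X Y XN YN x; rewrite inE => /andP[xY xX].
have cXY := munion_card m1 m2 XN YN.
have uP : uind B1 B2 (X :\ x).
  have [[C1 [C2 [C1B C2B eX]]] _] := munionP XN.
  exists (C1 :\ x), (C2 :\ x); split.
  - by rewrite eX setDUl.
  - by apply/indP; exists C1 => //; apply: subsetDl.
  - by apply/indP; exists C2 => //; apply: subsetDl.
have cX : #|X| = (#|X :\ x|).+1 by rewrite (cardsD1 x X) xX.
have lt : #|X :\ x| < #|Y| by rewrite -cXY cX.
have [z] := union_aug m1 m2 uP (munion_uind YN) lt.
rewrite !inE => /andP[zP zY] /uind_sub [C1 [C2 [C1B C2B sub]]].
have zx : z != x by apply: contraNneq xY => <-.
move: zP; rewrite zx /= => zX.
exists z; first by rewrite inE zX zY.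
have [W WN sW] := munion_exists C1B C2B.
have cW := munion_card m1 m2 XN WN.
suff -> : z |: (X :\ x) = W by [].
apply/eqP; rewrite eqEcard (subset_trans sub sW) /= -cW cardsU1 cX.
by rewrite !inE negb_and zx zX.
Qed.

Lemma dlow B A X : is_matroid B -> mrank B A <= #|X| + mrank B (A :\: X).
Proof.
move=> mB; have e : A = (A :&: X) :|: (A :\: X) by rewrite setID.
apply: leq_trans (_ : mrank B ((A :&: X) :|: (A :\: X)) <= _); first by rewrite -e.
have h := mrank_submod mB (A :&: X) (A :\: X).
apply: leq_trans (leq_trans (leq_addr _ _) h) _.
rewrite leq_add2r; apply: leq_trans (mrank_sub _ _) _.
by apply: subset_leq_card; apply: subsetIr.
Qed.

Lemma rkf_mrank B : is_matroid B -> rkf (mrank B).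
Proof.
move=> mB; split; [exact: mrank_sub| exact: mrank_mono | exact: mrank_submod].
Qed.

Lemma rkf_rd B A : is_matroid B ->
  rkf (fun X => #|X| + mrank B (A :\: X) - mrank B A).
Proof.
move=> mB; set r := mrank B.
have dl : forall X, r A <= #|X| + r (A :\: X) by move=> X; exact: dlow.
have rD : forall X, r (A :\: X) <= r A by move=> X; apply: mrank_mono; apply: subsetDl.
split.
- move=> X; have := rD X; clear; lia.
- move=> X Y XY.
  have h1 : A :\: X \subset (A :\: Y) :|: (Y :\: X).
    by apply/subsetP=> w; rewrite !inE; case: (w \in Y); case: (w \in X); case: (w \in A).
  have h2 : r (A :\: X) <= r (A :\: Y) + #|Y :\: X|.
    apply: leq_trans (mrank_mono _ h1) _; apply: leq_trans (rkf_subadd _ _ (rkf_mrank mB)) _.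
    by rewrite leq_add2l mrank_sub.
  have h3 : #|Y| = #|X| + #|Y :\: X|.
    by rewrite -(cardsID X Y) (setIidPr XY).
  apply: leq_sub2r; move: h2 h3; clear; lia.
- move=> X Y.
  have h := mrank_submod mB (A :\: X) (A :\: Y).
  rewrite -setDIr -setDUr in h.
  have c := cardsUI X Y.
  have := dl X; have := dl Y; have := dl (X :|: Y); have := dl (X :&: Y).
  move: h c; rewrite -/r; clear; lia.
Qed.

Lemma union_rank B1 B2 A : is_matroid B1 -> is_matroid B2 ->
  exists2 Y : {set E}, Y \subset A &
    mrank B1 Y + mrank B2 Y + #|A :\: Y| <= mrank (munion B1 B2) A.
Proof.
move=> m1 m2.
have [I [Y [IA YA i1 i2 v]]] := inter A (rkf_mrank m1) (rkf_rd A m2).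
exists Y => //.
set r := mrank B2 in i2 v *.
have iI : ind B1 I := mrank_ind m1.1 i1.
have dl : forall X, r A <= #|X| + r (A :\: X) by move=> X; exact: dlow.
have eI : r (A :\: I) = r A.
  have := dl I; have := mrank_mono B2 (subsetDl A I); move: i2; rewrite -/r; clear; lia.
have [C2 C2B eC2] := mrank_att (A :\: I) m2.1.
set J := (A :\: I) :&: C2.
have iJ : ind B2 J by apply/indP; exists C2 => //; apply: subsetIr.
have [C1 [C2' [C1B C2B' sub]]] : exists C1, exists C2, [/\ C1 \in B1, C2 \in B2 & I :|: J \subset C1 :|: C2].
  by apply: uind_sub; exists I, J.
have [W WN sW] := munion_exists C1B C2B'.
have cIJ : #|I :|: J| = #|I| + #|J|.
  rewrite cardsU; suff -> : I :&: J = set0 by rewrite cards0 subn0.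
  by apply/setP=> w; rewrite !inE; case: (w \in I); rewrite ?andbF.
have hW : #|I :|: J| <= mrank (munion B1 B2) A.
  apply: leq_trans (mrank_ge _ WN); apply: subset_leq_card.
  rewrite subsetI (subset_trans sub sW) andbT subUset IA /=.
  by apply: subset_trans (subsetIl _ _) (subsetDl _ _).
have eY : A :\: (A :\: Y) = Y.
  by apply/setP=> w; rewrite !inE; case wY: (w \in Y); case wA: (w \in A) => //=;
    move/subsetP: YA => /(_ w wY); rewrite wA.
rewrite eY in v.
have := dl (A :\: Y); rewrite eY.
move: v hW cIJ eC2 eI; rewrite -/J -/r; clear; lia.
Qed.

Lemma mrank_set0 B : mrank B set0 = 0.
Proof. by apply/eqP; rewrite -leqn0; apply: leq_trans (mrank_sub _ _) _; rewrite cards0. Qed.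

Lemma mrank_T B C : is_matroid B -> C \in B -> mrank B [set: E] = #|C|.
Proof.
move=> mB CB; apply/eqP; rewrite eqn_leq; apply/andP; split.
  by apply: mrank_le => X XB; rewrite setTI (equicard mB XB CB).
by apply: leq_trans (mrank_ge _ CB); rewrite setTI.
Qed.

Lemma mrank_dual B A C : is_matroid B -> C \in B ->
  mrank (mdual B) A + #|C| = #|A| + mrank B (~: A).
Proof.
move=> mB CB.
have pt : forall X, X \in B -> #|A :&: ~: X| + #|C| = #|A| + #|~: A :&: X|.
  move=> X XB; rewrite -(equicard mB XB CB).
  have c1 := cardsID X A. have c2 := cardsID A X.
  have -> : A :&: ~: X = A :\: X by rewrite setDE.
  have -> : ~: A :&: X = X :\: A by rewrite setDE setIC.
  rewrite setIC in c2; move: c1 c2; clear; lia.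
have [X0 X0B e0] := mrank_att (~: A) mB.1.
have [Y0 Y0B e1] := mrank_att A (dual_matroid mB).1.
move: Y0B e1 => /imsetP [X1 X1B ->] e1.
have g0 : #|A :&: ~: X0| <= mrank (mdual B) A by apply: mrank_ge; exact: imset_f.
have g1 : #|~: A :&: X1| <= mrank B (~: A) by apply: mrank_ge.
have p0 := pt _ X0B. have p1 := pt _ X1B.
move: g0 g1 p0 p1 e0 e1; clear; lia.
Qed.

Lemma dual_dense B : is_matroid B -> uniformly_dense B -> uniformly_dense (mdual B).
Proof.
move=> mB dB A A0.
have [C CB] := set0Pn _ mB.1.
have eT := mrank_dual [set: E] mB CB.
rewrite setCT mrank_set0 addn0 cardsT in eT.
have eA := mrank_dual A mB CB.
have rT := mrank_T mB CB.
have cc : #|~: A| * #|C| <= #|E| * mrank B (~: A).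
  case: (eqVneq (~: A) set0) => [->|nA]; first by rewrite cards0.
  by rewrite -rT; apply: dB.
have cA := cardsC A.
move: eT eA cc cA.
set a := #|A|; set c := #|~: A|; set n := #|E|; set k := #|C|.
set t := mrank (mdual B) A; set u := mrank (mdual B) [set: E].
set s := mrank B (~: A).
clearbody a c n k t u s; clear; nia.
Qed.

Lemma union_dense B1 B2 : is_matroid B1 -> is_matroid B2 ->
  uniformly_dense B1 -> uniformly_dense B2 -> uniformly_dense (munion B1 B2).
Proof.
move=> m1 m2 d1 d2 A A0.
have [Y YA hY] := union_rank A m1 m2.
have hn : mrank (munion B1 B2) [set: E] <= #|E| by rewrite -cardsT mrank_sub.
have hR : mrank (munion B1 B2) [set: E] <= mrank B1 [set: E] + mrank B2 [set: E].
  apply: mrank_le => X /munionP [[C1 [C2 [C1B C2B ->]]] _].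
  rewrite setTI; apply: leq_trans (leq_card_setU _ _) _.
  by apply: leq_add; apply: leq_trans (mrank_ge _ _); rewrite ?setTI.
have y1 : #|Y| * mrank B1 [set: E] <= #|E| * mrank B1 Y.
  by case: (eqVneq Y set0) => [->|nY]; [rewrite cards0|apply: d1].
have y2 : #|Y| * mrank B2 [set: E] <= #|E| * mrank B2 Y.
  by case: (eqVneq Y set0) => [->|nY]; [rewrite cards0|apply: d2].
have cA : #|A| = #|Y| + #|A :\: Y|.
  by rewrite -(cardsID Y A) (setIidPr YA).
move: hY hn hR y1 y2 cA.
set RN := mrank (munion B1 B2) [set: E]; set R1 := mrank B1 [set: E].
set R2 := mrank B2 [set: E]; set rN := mrank (munion B1 B2) A.
set a := #|A|; set y := #|Y|; set d := #|A :\: Y|; set n := #|E|.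
set r1 := mrank B1 Y; set r2 := mrank B2 Y.
clearbody RN R1 R2 rN a y d n r1 r2; clear => hY hn hR y1 y2 cA.
have s1 : n * (r1 + r2 + d) <= n * rN by rewrite leq_mul2l hY orbT.
have s2 : y * RN <= y * (R1 + R2) by rewrite leq_mul2l hR orbT.
have s3 : d * RN <= d * n by rewrite leq_mul2l hn orbT.
rewrite cA mulnDl; apply: leq_trans s1.
rewrite !mulnDr; move: s2 s3 y1 y2; rewrite mulnDr; clear; lia.
Qed.

End M.

Theorem corollary2p8 (E : finType) (B1 B2 : {set {set E}}) :
  is_matroid B1 -> loopless B1 -> uniformly_dense B1 ->
  is_matroid B2 -> loopless B2 -> uniformly_dense B2 ->
  is_matroid (mmeet B1 B2) /\ uniformly_dense (mmeet B1 B2).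
Proof.
move=> m1 _ d1 m2 _ d2.
have m1' := dual_matroid m1. have m2' := dual_matroid m2.
have mU := munion_matroid m1' m2'.
split; first exact: dual_matroid.
apply: dual_dense => //.
by apply: union_dense => //; apply: dual_dense.
Qed.
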